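(* Let $G$ be a topological groupoid such that $G^{(0)}$ is locally compact and $r\colon G\to G^{(0)}$ is open. Suppose that $(r,s)(G)$ is locally closed in $G^{(0)}\times G^{(0)}$. Then the orbit space $G^{(0)}/G$ (with the quotient topology) is locally compact. Furthermore, (a) if $G^{(0)}$ is $\sigma$-compact, then $G^{(0)}/G$ is $\sigma$-compact; (b) if $(r,s)(G)$ is closed (for instance if $G$ is proper), then $G^{(0)}/G$ is Hausdorff.
   Context: Compact: quasi-compact (every open cover has a finite subcover) and Hausdorff; locally compact: every point has a compact neighbourhood (not necessarily Hausdorff); $\sigma$-compact: countable union of compact subsets. A subset is locally closed if it is the intersection of an open and a closed set. $G$ is proper if $(r,s)\colon G\to G^{(0)}\times G^{(0)}$ is closed with quasi-compact fibres. *)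

(* Defs.v *)
From HB Require Import structures.
From mathcomp Require Import all_boot all_order all_algebra.
From mathcomp Require Import all_classical all_reals all_analysis.
From mathcomp Require Import generic_quotient.
Set Implicit Arguments. Unset Strict Implicit. Unset Printing Implicit Defensive.
Local Open Scope classical_set_scope.

(* A topological groupoid: arrow space G, unit space X (= G^(0)), range r,
   source s, unit inclusion u, partial multiplication mul (meaningful on
   composable pairs s g = r h), inversion inv. *)
Record top_groupoid (G X : topologicalType) := TopGroupoid {
  gr : G -> X;
  gs : G -> X;
  gu : X -> G;
  gmul : G -> G -> G;
  ginv : G -> G;
  gr_u : forall x, gr (gu x) = x;
  gs_u : forall x, gs (gu x) = x;
  gr_mul : forall g h, gs g = gr h -> gr (gmul g h) = gr g;
  gs_mul : forall g h, gs g = gr h -> gs (gmul g h) = gs h;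
  gmulA : forall g h k, gs g = gr h -> gs h = gr k ->
    gmul (gmul g h) k = gmul g (gmul h k);
  gmul_ul : forall g, gmul (gu (gr g)) g = g;
  gmul_ur : forall g, gmul g (gu (gs g)) = g;
  gr_inv : forall g, gr (ginv g) = gs g;
  gs_inv : forall g, gs (ginv g) = gr g;
  gmulV : forall g, gmul g (ginv g) = gu (gr g);
  gmulVl : forall g, gmul (ginv g) g = gu (gs g);
  gr_cont : continuous gr;
  gs_cont : continuous gs;
  gu_cont : continuous gu;
  ginv_cont : continuous ginv;
  gmul_cont : {within [set p : G * G | gs p.1 = gr p.2],
                continuous (fun p : G * G => gmul p.1 p.2)}
}.

Local Open Scope quotient_scope.
Section orbits.
Context {G X : topologicalType} (Gd : top_groupoid G X).

Definition orbit_relP (x y : X) : Prop := exists g, gr Gd g = x /\ gs Gd g = y.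
Definition orbit_rel_b (x y : X) : bool := `[< orbit_relP x y >].

Lemma orbit_rel_refl : reflexive orbit_rel_b.
Proof. by move=> x; apply/asboolP; exists (gu Gd x); rewrite gr_u gs_u. Qed.

Lemma orbit_rel_sym : symmetric orbit_rel_b.
Proof.
have H x y : orbit_rel_b x y -> orbit_rel_b y x.
  move=> /asboolP [g [<- <-]]; apply/asboolP; exists (ginv Gd g).
  by rewrite gr_inv gs_inv.
by move=> x y; apply/idP/idP; exact: H.
Qed.

Lemma orbit_rel_trans : transitive orbit_rel_b.
Proof.
move=> y x z /asboolP [g [<- e1]] /asboolP [h [e2 <-]]; apply/asboolP.
have c : gs Gd g = gr Gd h by rewrite e1 e2.
by exists (gmul Gd g h); rewrite gr_mul // gs_mul.
Qed.

Definition orbit_rel : equiv_rel X :=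
  EquivRel orbit_rel_b orbit_rel_refl orbit_rel_sym orbit_rel_trans.

Definition orbit_space : topologicalType :=
  quotient_topology {eq_quot orbit_rel}.

Definition rs_image : set (X * X) := range (fun g => (gr Gd g, gs Gd g)).
End orbits.

Definition open_map (A B : topologicalType) (f : A -> B) :=
  forall U : set A, open U -> open (f @` U).

(* compact = quasi-compact and Hausdorff (in the subspace topology) *)
Definition pcompact (T : topologicalType) (K : set T) :=
  compact K /\
  forall x y, K x -> K y -> x <> y ->
    exists U V : set T, [/\ open U, open V, U x, V y & U `&` V = set0].

Definition plocally_compact (T : topologicalType) :=
  forall x : T, exists K : set T, nbhs x K /\ pcompact K.

Definition psigma_compact (T : topologicalType) :=
  exists K : nat -> set T, (forall n, pcompact (K n)) /\ \bigcup_n K n = setT.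

Definition locally_closed (T : topologicalType) (A : set T) :=
  exists U C : set T, [/\ open U, closed C & A = U `&` C].

(* Main.v *)
Require Import Defs.
From HB Require Import structures.
From mathcomp Require Import all_boot all_order all_algebra.
From mathcomp Require Import all_classical all_reals all_analysis.
From mathcomp Require Import generic_quotient finmap.
Local Open Scope classical_set_scope.

Section Pt.
Context (T : topologicalType) (t0 : T).
Definition PT : Type := T.
HB.instance Definition _ := Topological.copy PT T.
HB.instance Definition _ := isPointed.Build PT t0.
Lemma cover_pt (A : set T) : compact A -> cover_compact A.
Proof. move=> cA; have := (@compact_cover PT); move=> e. by rewrite -[cover_compact A]/(@cover_compact PT A) -e. Qed.
End Pt.

Lemma compact_cov {T : topologicalType} {A : set T} : compact A -> cover_compact A.
Proof.
move=> cA; have [[t0 _]|A0] := pselect (A !=set0); first exact: cover_pt t0 _ cA.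
move=> I D f _ _; exists fset0 => // x Ax; exfalso; apply: A0; by exists x.
Qed.

Lemma shrink {T : topologicalType} {K W : set T} {x : T} :
  pcompact K -> nbhs x K -> nbhs x W ->
  exists L, [/\ nbhs x L, pcompact L & L `<=` W].
Proof.
move=> [cK hK] nK nW.
pose I := K° `&` W°.
have oI : open I by apply: openI; exact: open_interior.
have Ix : I x by split.
pose F := K `&` ~` I.
have cF : compact F by apply: compact_closedI => //; rewrite closedC.
have xK : K x by exact: nbhs_singleton.
have h y : exists UV : set T * set T, F y ->
   [/\ open UV.1, open UV.2, UV.1 x, UV.2 y & UV.1 `&` UV.2 = set0].
  have [Fy|nFy] := pselect (F y); last by exists (setT, setT).
  have yx : x <> y by move=> e; case: Fy => _; rewrite -e.
  have [U [V [oU oV Ux Vy UV]]] := hK x y xK Fy.1 yx.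
  by exists (U, V).
pose UV y := projT1 (cid (h y)).
have UVP y : F y -> _ := projT2 (cid (h y)).
have cov0 : F `<=` cover F (fun y => (UV y).2).
  by move=> y Fy; exists y => //; case: (UVP y Fy).
have oV y : F y -> open (UV y).2 by case/UVP.
have [D' sD cov] := compact_cov cF _ _ _ oV cov0.
pose U := \bigcap_(i in [set` D']) (UV i).1.
pose V := \bigcup_(i in [set` D']) (UV i).2.
have nU : nbhs x U.
  apply: filter_bigI => i /sD /set_mem Fi.
  by case: (UVP i Fi) => oU _ Ux _ _; apply: open_nbhs_nbhs.
have oVV : open V by apply: bigcup_open => i /= /sD /set_mem; exact: oV.
exists (K `&` ~` V); split.
- apply: (@filterS _ _ _ (K° `&` U)); last by apply: filterI => //; exact: nbhs_interior.
  move=> z [Kz Uz]; split; first exact: nbhs_singleton.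
  idtac.
  move=> [i /= Di Vi]; have /sD/set_mem Fi := Di.
  case: (UVP i Fi) => _ _ _ _ e.
  have : ((UV i).1 `&` (UV i).2) z by split => //; exact: Uz.
  by rewrite e.
- split; first by apply: compact_closedI => //; rewrite closedC.
  by move=> a b [Ka _] [Kb _]; exact: hK.
- move=> z [Kz nVz]; have [Iz|nIz] := pselect (I z).
    by case: Iz => _ /nbhs_singleton.
  by exfalso; apply: nVz; apply: cov.
Qed.

Lemma onth_index (T : eqType) (s : seq T) z : z \in s -> onth s (index z s) = Some z.
Proof.
elim: s => [|x s IH] //=; rewrite inE.
by case: (eqVneq z x) => [->|nzx] //=.
Qed.

Local Open Scope quotient_scope.
Section Grp.
Context {G X : topologicalType} (Gd : top_groupoid G X).
Definition qq : X -> orbit_space Gd := \pi_(orbit_space Gd).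
Lemma qE a b : qq a = qq b <-> orbit_relP Gd a b.
Proof.
have -> : (qq a = qq b) = (a = b %[mod {eq_quot (orbit_rel Gd)}]) by [].
split; first by move/eqquotP => /asboolP.
by move=> h; apply/eqquotP; apply/asboolP.
Qed.
Lemma qsurj z : qq (repr z) = z.
Proof. exact: reprK. Qed.
Lemma qcont : continuous qq.
Proof. exact: pi_continuous. Qed.

Lemma q_open (ro : open_map (gr Gd)) U : open U -> open (qq @` U).
Proof.
move=> oU.
have e : qq @^-1` (qq @` U) = gr Gd @` (gs Gd @^-1` U).
  apply/seteqP; split => z /=.
    case=> u Uu /qE [g [rg sg]]; exists (ginv Gd g) => /=.
      by rewrite gs_inv rg.
    by rewrite gr_inv.
  case=> g /= Usg <-; exists (gs Gd g) => //; apply/qE.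
  by exists (ginv Gd g); rewrite gr_inv gs_inv.
rewrite /open /= /quotient_open.
have -> : \pi_(orbit_space Gd) @^-1` (qq @` U) = gr Gd @` (gs Gd @^-1` U) by exact: e.
apply: ro; move/continuousP: (@gs_cont _ _ Gd); exact.
Qed.

Lemma q_nbhs (ro : open_map (gr Gd)) x L : nbhs x L -> nbhs (qq x) (qq @` L).
Proof.
move=> nL; apply: (@filterS _ _ _ (qq @` L°)).
  by move=> _ [y Ly <-]; exists y => //; exact: nbhs_singleton.
apply: open_nbhs_nbhs; split; first by apply: q_open => //; exact: open_interior.
by exists x.
Qed.

Lemma sep (ro : open_map (gr Gd)) (C : set (X * X)) : closed C -> rs_image Gd `<=` C ->
  forall a b, ~ C (a, b) -> exists P Q : set (orbit_space Gd),
    [/\ open P, open Q, P (qq a), Q (qq b) & P `&` Q = set0].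
Proof.
move=> cC sC a b nC.
have : nbhs (a, b) (~` C) by apply: open_nbhs_nbhs; split => //; rewrite openC.
case=> [[A B]] /= [nA nB] sAB.
exists (qq @` A°), (qq @` B°); split.
- by apply: q_open => //; exact: open_interior.
- by apply: q_open => //; exact: open_interior.
- by exists a.
- by exists b.
apply/seteqP; split => // z [[a' Aa' <-] [b' Bb' /esym /qE [g [rg sg]]]].
have : C (a', b') by apply: sC; exists g => //=; rewrite rg sg.
apply: sAB; split; exact: interior_subset.
Qed.
End Grp.

Theorem proposition2p12 (G X : topologicalType) (Gd : top_groupoid G X) :
  plocally_compact X ->
  open_map (gr Gd) ->
  locally_closed (rs_image Gd) ->
  [/\ plocally_compact (orbit_space Gd),
      (psigma_compact X -> psigma_compact (orbit_space Gd)) &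
      (closed (rs_image Gd) -> hausdorff_space (orbit_space Gd))].
Proof.
move=> lcX ro [U [C [oU cC eR]]].
have sRC : rs_image Gd `<=` C by rewrite eR => p [].
have lc : plocally_compact (orbit_space Gd).
  move=> z; pose x := repr z.
  have Uxx : U (x, x).
    have : rs_image Gd (x, x) by exists (gu Gd x) => //=; rewrite gr_u gs_u.
    by rewrite eR => -[].
  have : nbhs (x, x) U by apply: open_nbhs_nbhs.
  case=> [[A B]] /= [nA nB] sAB.
  have [K [nK pK]] := lcX x.
  have [L [nL [cL hL] LW]] := shrink pK nK (filterI nA nB).
  exists (qq Gd @` L); split.
    by rewrite -(qsurj Gd z); exact: q_nbhs.
  split.
    apply: continuous_compact => //; apply: continuous_subspaceT; exact: qcont.
  move=> _ _ [a La <-] [b Lb <-] ne.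
  apply: (sep Gd ro _ cC sRC) => Cab; apply: ne; apply/qE.
  have : rs_image Gd (a, b).
    rewrite eR; split; last exact: Cab.
    by apply: sAB; split; [exact: (LW a La).1|exact: (LW b Lb).2].
  by case=> g _ [<- <-]; exists g.
split => //.
  move=> [Kn [pKn covKn]].
  have hz z : exists K, nbhs z K /\ pcompact K := lc z.
  pose Kz z := projT1 (cid (hz z)).
  have KzP z : nbhs z (Kz z) /\ pcompact (Kz z) := projT2 (cid (hz z)).
  have hD n : exists D : {fset orbit_space Gd},
      qq Gd @` Kn n `<=` cover [set` D] (fun z => (Kz z)°).
    have cq : compact (qq Gd @` Kn n).
      apply: continuous_compact; last exact: (pKn n).1.
      apply: continuous_subspaceT; exact: qcont.
    have [D _ cD] := @compact_cov _ _ cq _ setT (fun z => (Kz z)°)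
      (fun i _ => @open_interior _ _) (fun y _ => ex_intro2 _ _ y I (KzP y).1).
    by exists D.
  pose D n := projT1 (cid (hD n)).
  have DP n : qq Gd @` Kn n `<=` cover [set` D n] (fun z => (Kz z)°) := projT2 (cid (hD n)).
  pose L (m : nat) := match (@choice.unpickle (prod nat nat) m) with
    | Some (n, i) => match onth (D n : seq _) i with Some z => Kz z | None => set0 end
    | None => set0 end.
  exists L; split.
    move=> m; rewrite /L; case: (choice.unpickle m) => [[n i]|]; last first.
      split; first exact: compact0.
      by [].
    case: (onth _ _) => [z|]; first exact: (KzP z).2.
    by split; first exact: compact0.
  apply/seteqP; split => // y _.
  have : [set: X] (repr y) by [].
  rewrite -covKn => -[n _ Kr].
  have : (qq Gd @` Kn n) y by exists (repr y) => //; exact: qsurj.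
  move=> /DP [z /= Dz Kzy].
  exists (@choice.pickle (prod nat nat) (n, index z (D n))) => //.
  rewrite /L choice.pickleK.
  have -> : onth (D n : seq _) (index z (D n)) = Some z.
    exact: onth_index.
  exact: interior_subset.
move=> cR; rewrite open_hausdorff => y1 y2 ne.
have [P [Q [oP oQ Py Qy PQ]]] : exists P Q : set (orbit_space Gd),
    [/\ open P, open Q, P (qq Gd (repr y1)), Q (qq Gd (repr y2)) & P `&` Q = set0].
  apply: (sep Gd ro _ cR (@subset_refl _ _)); move=> [g _ [e1 e2]]; move/eqP: ne; apply.
  by rewrite -(qsurj Gd y1) -(qsurj Gd y2); apply/qE; exists g.
exists (P, Q) => /=.
  by rewrite -(qsurj Gd y1) -(qsurj Gd y2) !in_setE.
by rewrite PQ.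
Qed.
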